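(* For every simplicial complex $\Delta$ on a finite vertex set $[m]$ one has $\mathrm{Inc}(\mathcal{C}(\Delta))\subseteq\mathcal{C}(\mathrm{Inc}(\Delta))$.
   Context: $\mathbb{N}=\{1,2,3,\dots\}$, $[m]=\{1,\dots,m\}$. A simplicial complex on $[m]$ is a collection of subsets of $[m]$ closed under taking subsets. For $d\ge1$, $F_d(\Delta)$ is the set of $d$-element faces of $\Delta$, viewed in $\binom{\mathbb{N}}{d}$ (the $d$-subsets of $\mathbb{N}$, written $\mathbf{u}=(u_1,\dots,u_d)$ with $u_1<\cdots<u_d$). Squashed order: $\mathbf{u}<\mathbf{v}$ iff the largest element of the symmetric difference of $\mathbf u,\mathbf v$ lies in $\mathbf{v}$. For finite $\mathcal{F}\subseteq\binom{\mathbb{N}}{d}$, $\mathcal{C}(\mathcal{F})$ is the set of the $|\mathcal{F}|$ smallest elements of $\binom{\mathbb{N}}{d}$ in the squashed order; for a simplicial complex, $\mathcal{C}(\Delta)=\bigcup_{d\ge1}\mathcal{C}(F_d(\Delta))$ (together with the empty face). $\mathrm{Inc}_1$ is the set of maps $\pi\colon\mathbb{N}\to\mathbb{N}$ with $\pi(j)<\pi(j+1)$ and $\pi(j)\le j+1$ for all $j$, acting by $\pi(\mathbf{u})=(\pi(u_1),\ldots,\pi(u_d))$; $\mathrm{Inc}(\mathcal{F})=\{\pi(\mathbf{u})\mid\mathbf{u}\in\mathcal{F},\pi\in\mathrm{Inc}_1\}$ and $\mathrm{Inc}(\Delta)=\bigcup_{d\ge1}\mathrm{Inc}(F_d(\Delta))$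 (together with the empty face). *)

(* Defs.v *)
From mathcomp Require Import all_boot.
Set Implicit Arguments. Unset Strict Implicit. Unset Printing Implicit Defensive.

(* A finite subset of N = {1,2,...} is represented canonically by the
   strictly increasing list of its elements (all >= 1). *)
Definition is_face (u : seq nat) : bool := sorted ltn u && all (fun x => 0 < x) u.

Definition dface (d : nat) (u : seq nat) : bool := is_face u && (size u == d).

(* Squashed order: u < v iff the largest element of the symmetric difference
   of u and v lies in v, i.e. there is x in v \ u such that u and v agree
   above x. *)
Definition sqlt (u v : seq nat) : bool :=
  has (fun x => (x \notin u) &&
         all (fun y => (y \in u) == (y \in v)) [seq y <- u ++ v | x < y]) v.

Definition has_card (P : seq nat -> Prop) (n : nat) : Prop :=
  exists s : seq (seq nat), uniq s /\ size s = n /\ forall x, P x <-> x \in s.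

(* C(F) for a finite family F of d-subsets: the |F| smallest d-subsets of N in
   squashed order, i.e. those d-subsets v such that the number of d-subsets
   w <= v is at most |F|. *)
Definition Cd (d : nat) (F : seq nat -> Prop) (v : seq nat) : Prop :=
  dface d v /\
  exists n k, has_card F n /\
    has_card (fun w => dface d w /\ (w = v \/ sqlt w v)) k /\ k <= n.

(* Inc_1 : maps pi : N -> N with pi(j) < pi(j+1) and pi(j) <= j+1 for j in N
   (values on 0 are irrelevant). *)
Definition Inc1 (pi : nat -> nat) : Prop :=
  forall j, 0 < j -> [/\ 0 < pi j, pi j < pi j.+1 & pi j <= j.+1].

Definition IncF (F : seq nat -> Prop) (v : seq nat) : Prop :=
  exists u pi, F u /\ Inc1 pi /\ v = map pi u.

Definition Fd (G : seq nat -> Prop) (d : nat) (u : seq nat) : Prop :=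
  G u /\ size u = d.

Definition simplicial_complex (m : nat) (D : seq nat -> Prop) : Prop :=
  (forall u, D u -> is_face u && all (fun x => x <= m) u) /\
  (forall u v, D u -> is_face v -> {subset v <= u} -> D v).

Definition Ccomplex (G : seq nat -> Prop) (v : seq nat) : Prop :=
  v = [::] \/ exists d, 0 < d /\ Cd d (Fd G d) v.

Definition Inccomplex (G : seq nat -> Prop) (v : seq nat) : Prop :=
  v = [::] \/ exists d, 0 < d /\ IncF (Fd G d) v.

(* Main.v *)
Require Import Defs.
From mathcomp Require Import all_boot.
From mathcomp Require Import zify.
Set Implicit Arguments. Unset Strict Implicit. Unset Printing Implicit Defensive.

Lemma bin_ge_n e n : 0 < n -> n <= 'C(n + e, e.+1).
Proof.
elim: n => [//|n IH] _.
case: n IH => [|n] IH; first by rewrite add1n binn.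
rewrite addSn binS.
have h1 := IH isT; have h2 : 0 < 'C(n.+1 + e, e) by rewrite bin_gt0; lia.
lia.
Qed.

Definition blk (e n : nat) : nat :=
  (find (fun k => n <= 'C(k, e.+1)) (iota 0 (n + e).+1)).-1.

Lemma blkP e n : 0 < n -> 'C(blk e n, e.+1) < n <= 'C((blk e n).+1, e.+1).
Proof.
move=> n0; rewrite /blk.
move: (iota 0 (n + e).+1) (size_iota 0 (n + e).+1) (fun i => @nth_iota 0 0 (n + e).+1 i) => s ss ns.
have hs : has (fun k => n <= 'C(k, e.+1)) s.
  apply/(has_nthP 0); exists (n + e); first by rewrite ss; lia.
  by rewrite ns ?add0n ?bin_ge_n //; lia.
have hlt := hs; rewrite has_find ss in hlt.
have H2 := nth_find 0 hs; rewrite /= ns // add0n in H2.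
have f0 : 0 < find (fun k => n <= 'C(k, e.+1)) s.
  move: H2; case: (find _ s) => [|//]; rewrite bin0n; lia.
have H1 := @before_find _ 0 (fun k => n <= 'C(k, e.+1)) s (find (fun k => n <= 'C(k, e.+1)) s).-1.
rewrite /= ns ?add0n in H1; last lia.
move/negbT: (H1 ltac:(lia)); rewrite -ltnNge => ->.
by rewrite prednK.
Qed.

Lemma blk_uniq e n K : 'C(K, e.+1) < n <= 'C(K.+1, e.+1) -> blk e n = K.
Proof.
move=> /andP[h1 h2].
have n0 : 0 < n by lia.
have /andP[b1 b2] := blkP e n0.
set B := blk e n in b1 b2 *.
case: (ltngtP B K) => // h.
- have : 'C(B.+1, e.+1) <= 'C(K, e.+1) by apply: leq_bin2l.
  lia.
- have : 'C(K.+1, e.+1) <= 'C(B, e.+1) by apply: leq_bin2l.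
  lia.
Qed.

Fixpoint g (d n : nat) : nat :=
  if d is e.+1 then
    (if n is 0 then 0 else 'C((blk e n).+1, e.+1) + g e (n - 'C(blk e n, e.+1)))
  else n.

Lemma g0n n : g 0 n = n. Proof. by []. Qed.
Lemma gd0 d : g d 0 = 0. Proof. by case: d. Qed.

Lemma gE e K s : 0 < s <= 'C(K, e) ->
  g e.+1 ('C(K, e.+1) + s) = 'C(K.+1, e.+1) + g e s.
Proof.
move=> /andP[s0 sK].
have hb : blk e ('C(K, e.+1) + s) = K.
  apply: blk_uniq; rewrite binS; lia.
rewrite /=. case E: ('C(K, e.+1) + s) => [|n]; first lia.
rewrite -E hb; congr (_ + _); congr (g e _); lia.
Qed.

Lemma gfull e K : e <= K -> g e 'C(K, e) = 'C(K.+1, e).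
Proof.
elim: e K => [|e IH] K eK; first by rewrite !bin0.
case: K eK => [//|K] eK.
rewrite binS gE; last by rewrite bin_gt0 leqnn; lia.
rewrite IH; last lia.
by rewrite [in RHS]binS.
Qed.

Lemma gF e K s : s <= 'C(K, e) -> 0 < 'C(K, e.+1) + s ->
  g e.+1 ('C(K, e.+1) + s) = 'C(K.+1, e.+1) + g e s.
Proof.
move=> sK h.
case: s sK h => [|s] sK h; last by apply: gE; lia.
rewrite addn0 gd0 addn0 gfull //.
by move: h; rewrite addn0 bin_gt0.
Qed.

Lemma gdec e n : 0 < n -> exists K s,
  [/\ n = 'C(K, e.+1) + s, 0 < s, s <= 'C(K, e) & g e.+1 n = 'C(K.+1, e.+1) + g e s].
Proof.
move=> n0; have /andP[b1 b2] := blkP e n0.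
exists (blk e n), (n - 'C(blk e n, e.+1)).
have h1 : n = 'C(blk e n, e.+1) + (n - 'C(blk e n, e.+1)) by lia.
have h3 : n - 'C(blk e n, e.+1) <= 'C(blk e n, e) by move: b2; rewrite binS; lia.
split => //; first lia.
by rewrite {1}h1 gE //; apply/andP; split => //; lia.
Qed.

Lemma g1S e : g e.+1 1 = 1 + g e 1.
Proof. by have := @gE e e 1; rewrite (bin_small (ltnSn e)) !binn add0n => ->. Qed.

Lemma gS e n : g e n < g e n.+1.
Proof.
elim: e n => [//|e IH] n.
case: n => [|n].
  by rewrite gd0 g1S.
have [K [s [hn s0 sK hg]]] := gdec e (ltn0Sn n).
rewrite hg.
case: (ltngtP s 'C(K, e)) sK => // hs _.
- have -> : n.+2 = 'C(K, e.+1) + s.+1 by lia.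
  rewrite gE; last lia.
  have := IH s; lia.
- have eK : e <= K by rewrite -bin_gt0 -hs.
  have -> : n.+2 = 'C(K.+1, e.+1) + 1 by rewrite binS; lia.
  rewrite gE; last by rewrite bin_gt0; lia.
  rewrite hs gfull // [in X in _ < X]binS.
  have := IH 0; rewrite gd0; lia.
Qed.

Lemma g_mono e m n : m <= n -> g e m <= g e n.
Proof.
move=> /subnK <-; elim: (n - m) => [//|k IH]; rewrite addSn.
exact: leq_trans IH (ltnW (gS e _)).
Qed.

Lemma g_addr e n k : g e n + k <= g e (n + k).
Proof.
elim: k => [|k IH]; first by rewrite !addn0.
rewrite !addnS; have := gS e (n + k); lia.
Qed.

Lemma g_id e n : n <= g e n.
Proof. by have := g_addr e 0 n; rewrite gd0 !add0n. Qed.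

Lemma g1 e : g e 1 = e.+1.
Proof.
elim: e => [//|e IH].
by rewrite g1S IH.
Qed.

Definition Subg e := forall x y, g e (x + y) <= g e x + g e y.
Definition Ebd e := forall b, g e.+1 b <= b + g e b.

Lemma g1n n : 0 < n -> g 1 n = n.+1.
Proof.
move=> n0; have [K [s [hn s0 sK ->]]] := gdec 0 n0.
move: sK; rewrite bin0 => sK; have -> : s = 1 by lia.
rewrite g0n !bin1 in hn *; lia.
Qed.

Lemma BB e : Subg e -> forall M t, e < M ->
  'C(M.+1, e.+1) + g e t <= g e.+1 ('C(M, e.+1) + t).
Proof.
move=> Se M t; elim: t {-2}t (leqnn t) M => [|T IH] t tT M eM.
  have -> : t = 0 by lia.
  by rewrite gd0 !addn0 gfull.
case: (leqP t 'C(M, e)) => ht.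
  rewrite gF //; rewrite addn_gt0 bin_gt0 eM //.
have cM : 0 < 'C(M, e) by rewrite bin_gt0; lia.
have -> : 'C(M, e.+1) + t = 'C(M.+1, e.+1) + (t - 'C(M, e)) by rewrite binS; lia.
have h1 := IH (t - 'C(M, e)) ltac:(lia) M.+1 ltac:(lia).
have h2 := Se 'C(M, e) (t - 'C(M, e)); rewrite subnKC ?(ltnW ht) // gfull in h2; last lia.
have P1 := binS M.+1 e.
lia.
Qed.

Lemma E0 : Ebd 0.
Proof.
move=> b; case: b => [|b]; first by rewrite gd0.
by rewrite g1n // g0n; lia.
Qed.

Lemma Estep e : Subg e -> Ebd e -> Ebd e.+1.
Proof.
move=> Se Ee b; case: b => [|b]; first by rewrite gd0.
have [K [s [hn s0 sK ->]]] := gdec e.+1 (ltn0Sn b).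
have eK : e.+1 <= K by rewrite -bin_gt0; lia.
case: (ltngtP K e.+1) eK => // hK _.
- case: K hK hn sK => [//|M] hM hn sK.
  have h1 : 'C(M, e.+1) + s <= b.+1 by rewrite hn binS; lia.
  have h2 := g_mono e.+1 h1.
  have h3 := BB Se s (hM : e < M).
  have h4 := Ee s.
  have P1 := binS M.+1 e.+1.
  lia.
- subst K; move: sK hn; rewrite binn (bin_small (ltnSn e.+1)) => sK hn.
  have s1 : s = 1 by lia.
  subst s; have -> : b.+1 = 1 by lia. rewrite binn; lia.
Qed.

Definition Ar f := forall a b, g f.+1 (a + b) <= maxn (g f.+1 a) (a + b) + g f b.
Definition Z1p f := forall m P r, f <= m -> P < 'C(m, f) -> r <= g f P ->
  g f 'C(m, f) + g f r <= g f P + g f (r + ('C(m, f) - P)).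
Definition Z2p f := forall m P r, f <= m -> P < 'C(m, f) -> g f P < r ->
  g f 'C(m, f) + g f r <= r + g f (r + ('C(m, f) - P)).
Definition Zp f := forall m P r, f <= m -> P < 'C(m, f) ->
  g f 'C(m, f) + g f r <= maxn (g f P) r + g f (r + ('C(m, f) - P)).

Lemma Ar0 : Ar 0.
Proof.
move=> a b; case: b => [|b]; first by rewrite !addn0; lia.
rewrite g1n ?g0n; lia.
Qed.

Lemma Z1_1 : Z1p 1.
Proof.
move=> m P r m1 Pm rP.
rewrite gfull // !bin1 in Pm *.
case: P Pm rP => [|P] Pm rP.
  move: rP; rewrite gd0 leqn0 => /eqP ->; rewrite subn0 !add0n gd0 g1n //; lia.
rewrite g1n // in rP *.
have := g_addr 1 r (m - P.+1); lia.
Qed.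

Lemma Zcomb f : Z1p f -> Z2p f -> Zp f.
Proof.
move=> h1 h2 m P r fm Pm.
case: (leqP r (g f P)) => hr.
  have := h1 m P r fm Pm hr; lia.
have := h2 m P r fm Pm hr; lia.
Qed.

Lemma Z2 e : Ar e -> Subg e -> Z2p e.+1.
Proof.
move=> A Se m P r em Pm hr.
have Pr : P < r by have := g_id e.+1 P; lia.
have h1 := A P (r - P); rewrite subnKC ?(ltnW Pr) // in h1.
have h2 := BB Se (r - P) (em : e < m).
have -> : r + ('C(m, e.+1) - P) = 'C(m, e.+1) + (r - P) by lia.
rewrite gfull //; lia.
Qed.

Lemma Z1case1 e : Z1p e.+1 -> Subg e.+2 -> Subg e.+1 ->
  forall m P r, e.+2 <= m -> 'C(m.-1, e.+2) <= P -> P < 'C(m, e.+2) -> r <= g e.+2 P ->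
  g e.+2 'C(m, e.+2) + g e.+2 r <= g e.+2 P + g e.+2 (r + ('C(m, e.+2) - P)).
Proof.
move=> Z1 S2 S1 m P r fm hP0 Pm rP.
case: r rP => [|r] rP.
  rewrite gd0 addn0 add0n; have := S2 P ('C(m, e.+2) - P).
  by rewrite subnKC // ltnW.
case: m fm hP0 Pm => [//|m1] fm hP0 Pm; rewrite [m1.+1.-1]/= in hP0.
have eN : e.+1 <= m1 by lia.
set N' := 'C(m1, e.+1).
have PN : 'C(m1.+1, e.+2) = 'C(m1, e.+2) + N' by rewrite binS.
set P' := P - 'C(m1, e.+2).
have hPP : P = 'C(m1, e.+2) + P' by lia.
have P'N : P' < N' by lia.
have P0 : 0 < P by case: (posnP P) rP => [->|//]; rewrite gd0.
have hP : g e.+2 P = 'C(m1.+1, e.+2) + g e.+1 P'.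
  by rewrite {1}hPP gF //; [lia | rewrite -hPP].
have hN : g e.+2 'C(m1.+1, e.+2) = 'C(m1.+1, e.+2) + 'C(m1.+1, e.+1).
  by rewrite gfull // binS.
have hN' : g e.+1 N' = 'C(m1.+1, e.+1) by rewrite gfull.
set q := 'C(m1.+1, e.+2) - P.
have hq : q = N' - P' by lia.
have [M1 [r1 [hr r10 r1M hgr]]] := gdec e.+1 (ltn0Sn r).
have eM1 : e.+1 <= M1 by rewrite -bin_gt0; lia.
have cond : m1 < M1 -> r1 <= g e.+1 P'.
  move=> hM; have : 'C(m1.+1, e.+2) <= 'C(M1, e.+2) by apply: leq_bin2l.
  lia.
rewrite hP hN hgr.
case: (leqP (r1 + q) 'C(M1, e.+1)) => hq1.
- (* window stays in one block *)
  have hrq : r.+1 + q = 'C(M1, e.+2) + (r1 + q) by lia.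
  rewrite hrq gE; last lia.
  have rP' : r1 <= g e.+1 P'.
    case: (leqP M1 m1) => hM; last exact: cond.
    have : 'C(M1, e.+1) <= N' by apply: leq_bin2l.
    have := g_id e.+1 P'; lia.
  have := Z1 m1 P' r1 eN P'N rP'.
  rewrite -/N' -hq hN'; lia.
- (* window crosses into the next block *)
  set q1 := 'C(M1, e.+1) - r1.
  set t := r1 + q - 'C(M1, e.+1).
  have ht : r.+1 + q = 'C(M1.+1, e.+2) + t by rewrite binS; lia.
  have hBB := BB S1 t (ltac:(lia) : e.+1 < M1.+1); rewrite -ht in hBB.
  have hNM : g e.+1 'C(M1, e.+1) = 'C(M1.+1, e.+1) by rewrite gfull.
  have P1 := binS M1.+1 e.+1.
  have hSub := S1 P' t.
  have ePt : P' + t = N' - q1 by lia.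
  rewrite ePt in hSub.
  case: (posnP q1) => q10.
  + have hr1 : r1 = 'C(M1, e.+1) by lia.
    have ht' : N' - q1 = N' by lia.
    rewrite ht' in hSub; rewrite hr1 hNM; lia.
  + have rc : r1 <= g e.+1 (N' - q1).
      case: (leqP M1 m1) => hM.
        have : 'C(M1, e.+1) <= N' by apply: leq_bin2l.
        have := g_id e.+1 (N' - q1); lia.
      have := cond hM; have := g_mono e.+1 (leq_addr t P'); rewrite ePt; lia.
    have hZ := Z1 m1 (N' - q1) r1 eN ltac:(lia) rc.
    have e2 : r1 + ('C(m1, e.+1) - (N' - q1)) = 'C(M1, e.+1) by rewrite -/N'; lia.
    rewrite e2 -/N' hNM hN' in hZ; lia.
Qed.

Lemma Z1S e : Z1p e.+1 -> Subg e.+2 -> Subg e.+1 -> Z1p e.+2.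
Proof.
move=> Z1 S2 S1 m; elim: m {-2}m (leqnn m) => [|M IH] m mM P r fm Pm rP.
  lia.
case: (leqP 'C(m.-1, e.+2) P) => hP.
  exact: Z1case1.
case: m mM fm Pm hP => [//|m1] mM fm Pm hP; rewrite [m1.+1.-1]/= in hP.
have fm1 : e.+2 <= m1 by rewrite -bin_gt0; lia.
have PN := binS m1 e.+1.
have c0 : 0 < 'C(m1, e.+1) by rewrite bin_gt0; lia.
have h1 := IH m1 ltac:(lia) P r fm1 hP rP.
have hr2 : r + ('C(m1, e.+2) - P) <= g e.+2 'C(m1, e.+2).
  have := g_addr e.+2 P ('C(m1, e.+2) - P); rewrite subnKC ?(ltnW hP) //; lia.
have h2 := Z1case1 Z1 S2 S1 (m:=m1.+1) (P:='C(m1, e.+2)) fm (leqnn _) ltac:(lia) hr2.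
have e2 : r + ('C(m1, e.+2) - P) + ('C(m1.+1, e.+2) - 'C(m1, e.+2)) =
          r + ('C(m1.+1, e.+2) - P) by lia.
rewrite e2 in h2; lia.
Qed.

Lemma ArS e : Subg e.+1 -> Subg e -> Ebd e -> Ebd e.+1 -> Zp e.+1 -> Ar e.+1.
Proof.
move=> S1 S0 E0' E1 Z a b.
case: (posnP b) => [->|b0]; first by rewrite !addn0; lia.
case: (posnP a) => [->|a0]; first by rewrite gd0 !add0n; have := E1 b; lia.
have [K [s [ha s0 sK hga]]] := gdec e.+1 a0.
have [K2 [s2 [hab s20 s2K hgab]]] := gdec e.+1 (ltn_addr b a0).
have eK : e.+1 <= K by rewrite -bin_gt0; lia.
have KK2 : K <= K2.
  case: (leqP K K2) => // h.
  have : 'C(K2.+1, e.+2) <= 'C(K, e.+2) by apply: leq_bin2l.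
  have := binS K2 e.+1; lia.
rewrite hgab hga.
case: (ltngtP K2 K.+1) => hK.
-
  have eK2 : K2 = K by lia.
  subst K2.
  have -> : s2 = s + b by lia.
  have := S1 s b; lia.
-
  case: K2 hK hab hgab s2K KK2 => [//|M] hK hab hgab s2K KK2.
  have P1 := binS M e.+1.
  have h1 : 'C(K.+1, e.+2) <= 'C(M, e.+2) by apply: leq_bin2l; lia.
  have h0 := binS K e.+1.
  have hb : 'C(M, e.+1) + s2 <= b by lia.
  have h2 := g_mono e.+1 hb.
  have h3 := BB S0 s2 (ltac:(lia) : e < M).
  have h4 := E0' s2.
  have P2 := binS M.+1 e.+1.
  lia.
-
  subst K2.
  have P1 := binS K e.+1.
  have P2 := binS K.+1 e.+1.
  have hN : g e.+1 'C(K, e.+1) = 'C(K.+1, e.+1) by rewrite gfull.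
  case: (ltngtP s 'C(K, e.+1)) sK => // hs _.
  + have hZ := Z K s s2 eK hs.
    have -> : b = s2 + ('C(K, e.+1) - s) by lia.
    rewrite hN in hZ; lia.
  + have -> : b = s2 by lia.
    rewrite hs hN; lia.
Qed.

Definition dec (u : seq nat) := sorted (fun a b => b < a) u && all (fun x => 0 < x) u.
Definition dset d u := (size u == d) && dec u.

Lemma dec0 : dec [::]. Proof. by []. Qed.

Lemma decE x r : dec (x :: r) = [&& all (fun y => y < x) r, dec r & 0 < x].
Proof.
rewrite /dec /= path_sortedE; last by move=> a b c /= h1 h2; lia.
by case: (all _ r); case: (sorted _ r); case: (0 < x); case: (all _ r).
Qed.

Lemma dsetE d x r : dset d (x :: r) =
  [&& d == (size r).+1, all (fun y => y < x) r, dec r & 0 < x].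
Proof. by rewrite /dset decE /= eq_sym. Qed.

Lemma dset_cons d x r : dset d.+1 (x :: r) = [&& all (fun y => y < x) r, dset d r & 0 < x].
Proof. rewrite /dset decE /= eqSS; by case: (size r == d); case: (all _ r); case: (dec r). Qed.

Lemma dset0 u : dset 0 u = (u == [::]).
Proof. by case: u. Qed.

Lemma dset_size d u : dset d u -> size u = d.
Proof. by case/andP => /eqP. Qed.

Lemma dec_head_bound x r y : dec (x :: r) -> y \in x :: r -> y <= x.
Proof.
rewrite decE => /and3P[/allP h _ _]; rewrite inE => /orP[/eqP -> //|/h]; lia.
Qed.

Fixpoint sets (d M : nat) {struct M} : seq (seq nat) :=
  match d, M with
  | 0, _ => [:: [::]]
  | _.+1, 0 => [::]
  | d'.+1, M'.+1 => sets d M' ++ [seq M'.+1 :: r | r <- sets d' M']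
  end.

Lemma size_sets d M : size (sets d M) = 'C(M, d).
Proof.
elim: M d => [|M IH] [|d] //=.
by rewrite size_cat size_map !IH binS.
Qed.

Lemma mem_sets d M u : (u \in sets d M) = dset d u && all (fun x => x <= M) u.
Proof.
elim: M d u => [|M IH] [|d] u /=.
- by rewrite inE dset0; case: u.
- case: u => [|x r] //; rewrite dset_cons /= in_nil.
  apply/esym/negbTE/negP => /andP[/and3P[_ _ h1] /andP[h2 _]]; lia.
- by rewrite inE dset0; case: u.
- rewrite mem_cat IH; apply/idP/idP.
  + case/orP => [/andP[-> /allP h]|].
      by rewrite andTb; apply/allP => y /h; lia.
    case/mapP => r; rewrite IH => /andP[hr /allP hM] ->.
    rewrite dset_cons hr andbT /= leqnn /=; apply/andP; split.
      by apply/allP => y /hM; lia.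
    by apply/allP => y /hM; lia.
  + case: u => [//|x r] /andP[hd /= /andP[xM hall]].
    case: (ltngtP x M.+1) xM => // hx _.
    * apply/orP; left; rewrite hd /=; apply/andP; split; first lia.
      apply/allP => y yr; have := dec_head_bound (x:=x) (r:=r) (y:=y).
      move: hd => /andP[_ hdec]; rewrite inE yr orbT => /(_ hdec isT); lia.
    * apply/orP; right; apply/mapP; exists r => //; last by rewrite hx.
      rewrite IH; move: hd; rewrite dset_cons => /and3P[hr hdr _].
      rewrite hdr /=; apply/allP => y /(allP hr); lia.
Qed.

Lemma uniq_sets d M : uniq (sets d M).
Proof.
elim: M d => [|M IH] [|d] //=.
rewrite cat_uniq IH map_inj_uniq ?IH; last by move=> a b [].
rewrite andbT /=; apply/hasPn => u /mapP[r _ ->].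
by rewrite mem_sets /= ltnn andbF.
Qed.

Fixpoint rk (u : seq nat) : nat :=
  if u is x :: r then 'C(x.-1, (size r).+1) + rk r else 1.

Lemma rk_bound d u M : dset d u -> all (fun x => x <= M) u -> 0 < rk u <= 'C(M, d).
Proof.
elim: u d M => [|x r IH] d M /=; first by move=> /andP[/eqP <- _] _; rewrite bin0.
case: d => [//|d]; rewrite dset_cons => /and3P[hr hd x0] /andP[xM hM].
have := IH d x.-1 hd; rewrite (dset_size hd).
have -> : all (fun y => y <= x.-1) r by apply/allP => y /(allP hr); lia.
move=> /(_ isT) /andP[h1 h2].
have h3 : 'C(x.-1, d.+1) + 'C(x.-1, d) = 'C(x, d.+1).
  by rewrite -binS prednK.
have := leq_bin2l d.+1 xM; lia.
Qed.

Lemma rk_cons_bound d x r : dset d.+1 (x :: r) ->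
  'C(x.-1, d.+1) < rk (x :: r) <= 'C(x, d.+1).
Proof.
rewrite dset_cons => /and3P[hr hd x0] /=.
rewrite (dset_size hd).
have := @rk_bound d r x.-1 hd.
have -> : all (fun y => y <= x.-1) r by apply/allP => y /(allP hr); lia.
move=> /(_ isT) /andP[h1 h2].
have h3 : 'C(x.-1, d.+1) + 'C(x.-1, d) = 'C(x, d.+1) by rewrite -binS prednK.
lia.
Qed.

Fixpoint lexlt (u v : seq nat) : bool :=
  match u, v with
  | x :: r, y :: s => (x < y) || ((x == y) && lexlt r s)
  | _, _ => false
  end.

Lemma rk_lt d u v : dset d u -> dset d v -> (rk u < rk v) = lexlt u v.
Proof.
elim: u d v => [|x r IH] d [|y s] //=.
- by move=> /dset_size <- /dset_size.
- by move=> /dset_size <- /dset_size.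
case: d => [//|d] hu hv.
have bu := rk_cons_bound hu; have bv := rk_cons_bound hv.
move: hu hv; rewrite !dset_cons => /and3P[_ hr _] /and3P[_ hs _].
move: bu bv => /=; rewrite (dset_size hr) (dset_size hs) => bu bv.
case: (ltngtP x y) => hxy /=.
- have : 'C(x, d.+1) <= 'C(y.-1, d.+1) by apply: leq_bin2l; lia.
  lia.
- have : 'C(y, d.+1) <= 'C(x.-1, d.+1) by apply: leq_bin2l; lia.
  lia.
- subst y; rewrite -(IH d s hr hs); lia.
Qed.

Lemma rk_inj d u v : dset d u -> dset d v -> rk u = rk v -> u = v.
Proof.
elim: u d v => [|x r IH] d [|y s] //=.
- by move=> /dset_size <- /dset_size.
- by move=> /dset_size <- /dset_size.
case: d => [//|d] hu hv.
have bu := rk_cons_bound hu; have bv := rk_cons_bound hv.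
move: hu hv; rewrite !dset_cons => /and3P[_ hr _] /and3P[_ hs _].
move: bu bv => /=; rewrite (dset_size hr) (dset_size hs) => bu bv heq.
case: (ltngtP x y) => hxy.
- have : 'C(x, d.+1) <= 'C(y.-1, d.+1) by apply: leq_bin2l; lia.
  lia.
- have : 'C(y, d.+1) <= 'C(x.-1, d.+1) by apply: leq_bin2l; lia.
  lia.
- subst y; congr (_ :: _); apply: (IH d s hr hs); lia.
Qed.

(* Inc as an operation on decreasing lists *)
Fixpoint incs (u : seq nat) : seq (seq nat) :=
  if u is x :: r then (x :: r) :: [seq x.+1 :: s | s <- incs r] else [:: [::]].

Lemma incs_self u : u \in incs u.
Proof. by case: u => [|x r]; rewrite inE eqxx. Qed.

Lemma incs_size u w : w \in incs u -> size w = size u.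
Proof.
elim: u w => [|x r IH] w /=; first by rewrite inE => /eqP ->.
rewrite inE => /orP[/eqP -> //|/mapP[s hs ->]] /=; by rewrite (IH s).
Qed.

Lemma incs_bound u w b : all (fun y => y < b) u -> w \in incs u -> all (fun y => y <= b) w.
Proof.
elim: u w => [|x r IH] w /=; first by rewrite inE => _ /eqP ->.
move=> /andP[xb hr]; rewrite inE => /orP[/eqP ->|/mapP[s hs ->]] /=.
  rewrite ltnW //=; apply/allP => y /(allP hr); lia.
by rewrite xb /= (IH s).
Qed.

Lemma incs_pos u w : all (fun y => 0 < y) u -> w \in incs u -> all (fun y => 0 < y) w.
Proof.
elim: u w => [|x r IH] w /=; first by rewrite inE => _ /eqP ->.
move=> /andP[x0 hr]; rewrite inE => /orP[/eqP ->|/mapP[s hs ->]] /=.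
  by rewrite x0 hr.
by rewrite (IH s).
Qed.

Lemma incs_dset d u w : dset d u -> w \in incs u -> dset d w.
Proof.
elim: u d w => [|x r IH] d w /=; first by rewrite inE => h /eqP ->.
case: d => [//|d].
rewrite dset_cons => /and3P[hr hd x0]; rewrite inE => /orP[/eqP ->|/mapP[s hs ->]].
  by rewrite dset_cons hr hd x0.
rewrite dset_cons (IH d s hd hs) andbT /=.
have := incs_bound hr hs; move=> /allP h; apply/allP => y /h; lia.
Qed.

Lemma incs_head u w : w \in incs u -> head 0 w <= (head 0 u).+1.
Proof.
case: u => [|x r] /=; first by rewrite inE => /eqP ->.
by rewrite inE => /orP[/eqP -> //|/mapP[s hs ->]].
Qed.

Lemma rk_incs d u w : dset d u -> w \in incs u -> rk w <= rk (map S u).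
Proof.
elim: u d w => [|x r IH] d w /=; first by rewrite inE => _ /eqP ->.
case: d => [//|d]; rewrite dset_cons => /and3P[hr hd x0].
rewrite inE => /orP[/eqP ->|/mapP[s hs ->]] /=.
  have := @rk_bound d r x.-1 hd.
  have -> : all (fun y => y <= x.-1) r by apply/allP => y /(allP hr); lia.
  move=> /(_ isT) /andP[h1 h2].
  have h3 : 'C(x.-1, d.+1) + 'C(x.-1, d) = 'C(x, d.+1) by rewrite -binS prednK.
  rewrite size_map (dset_size hd); lia.
rewrite size_map (incs_size hs) (dset_size hd).
have := IH d s hd hs; lia.
Qed.

Lemma rk_S d u : dset d u -> rk (map S u) = g d (rk u).
Proof.
elim: u d => [|x r IH] d /=; first by move=> /dset_size <-.
case: d => [//|d]; rewrite dset_cons => /and3P[hr hd x0].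
have := @rk_bound d r x.-1 hd.
have -> : all (fun y => y <= x.-1) r by apply/allP => y /(allP hr); lia.
move=> /(_ isT) /andP[h1 h2].
rewrite size_map (dset_size hd) gE ?h1 //= (IH d hd) prednK //.
Qed.

Definition IncL (F : seq (seq nat)) : seq (seq nat) := undup (flatten (map incs F)).

Lemma mem_IncL F w : (w \in IncL F) = has (fun u => w \in incs u) F.
Proof.
rewrite mem_undup; apply/flatten_mapP/hasP; by move=> [u h1 h2]; exists u.
Qed.

Definition MT d := forall F, uniq F -> all (dset d) F -> g d (size F) <= size (IncL F).

Lemma size_le_IncL F : uniq F -> size F <= size (IncL F).
Proof.
move=> uF; apply: uniq_leq_size => // u uF'.
by rewrite mem_IncL; apply/hasP; exists u => //; exact: incs_self.
Qed.

Lemma MT0 : MT 0.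
Proof. by move=> F uF _; rewrite g0n; exact: size_le_IncL. Qed.

Definition mh (F : seq (seq nat)) := foldr (fun u m => maxn (head 0 u) m) 0 F.

Lemma mh_ge F u : u \in F -> head 0 u <= mh F.
Proof.
elim: F => [//|v F IH] /=; rewrite inE => /orP[/eqP ->|/IH]; lia.
Qed.

Lemma mh_in F : F != [::] -> exists2 u, u \in F & head 0 u = mh F.
Proof.
elim: F => [//|v F IH] _ /=.
case: (leqP (mh F) (head 0 v)) => h.
  by exists v; rewrite ?inE ?eqxx //; lia.
have hF : F != [::] by case: F h {IH} => //= ; rewrite ltn0.
have [u uF hu] := IH hF; exists u; first by rewrite inE uF orbT.
lia.
Qed.

Lemma MTS d : MT d -> Ar d -> MT d.+1.
Proof.
move=> MTd A F; have [n hn] : exists n, size F <= n by exists (size F).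
elim: n F hn => [|n IH] F hn uF aF.
  by move: hn; rewrite leqn0 => /nilP ->; rewrite gd0.
case: (eqVneq F [::]) => [-> //|F0].
set L := mh F.
set T := [seq behead u | u <- F & head 0 u == L].
set R := [seq u <- F | head 0 u != L].
have hsize : size F = size R + size T.
  rewrite size_map !size_filter addnC; symmetry; exact: count_predC.
have nonempty : forall u, u \in F -> u = head 0 u :: behead u.
  move=> u /(allP aF); case: u => // /andP[/eqP] //.
have uT : uniq T.
  rewrite map_inj_in_uniq ?filter_uniq //.
  move=> u v; rewrite !mem_filter => /andP[/eqP hu uF'] /andP[/eqP hv vF] he.
  by rewrite (nonempty u uF') (nonempty v vF) hu hv he.
have aT : all (dset d) T.
  apply/allP => w /mapP[u]; rewrite mem_filter => /andP[_ uF'] ->.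
  have := allP aF u uF'; rewrite (nonempty u uF') /= dset_cons => /and3P[_ -> _] //.
have aR : all (dset d.+1) R by apply/allP => u; rewrite mem_filter => /andP[_ /(allP aF)].
have uR : uniq R by rewrite filter_uniq.
have T0 : 0 < size T.
  have [u uF' hu] := mh_in F0.
  rewrite size_map size_filter -has_count; apply/hasP; exists u => //; by rewrite /= hu.
have hR : size R <= n. move: hn T0; rewrite hsize. lia.
have IHR := IH R hR uR aR.
have MTT := MTd T uT aT.
set Aa := undup (IncL R ++ F).
set Bb := [seq L.+1 :: s | s <- IncL T].
have hA : forall w, w \in Aa -> head 0 w <= L.
  move=> w; rewrite mem_undup mem_cat => /orP[|/mh_ge //].
  rewrite mem_IncL => /hasP[u]; rewrite mem_filter => /andP[hu uF'] hw.
  have := incs_head hw; have := mh_ge uF'; rewrite -/L; move: hu; lia.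
have uAB : uniq (Aa ++ Bb).
  rewrite cat_uniq undup_uniq map_inj_uniq ?undup_uniq //=; last by move=> a b [].
  rewrite andbT; apply/hasPn => w /mapP[s _ ->]; apply/negP => /hA /=; lia.
have sAB : {subset Aa ++ Bb <= IncL F}.
  move=> w; rewrite mem_cat mem_undup mem_cat => /orP[/orP[|]|].
  - rewrite !mem_IncL => /hasP[u]; rewrite mem_filter => /andP[_ uF'] hw.
    by apply/hasP; exists u.
  - move=> wF; rewrite mem_IncL; apply/hasP; exists w => //; exact: incs_self.
  - case/mapP => s; rewrite mem_IncL => /hasP[v] /mapP[u].
    rewrite mem_filter => /andP[/eqP hu uF'] -> hs ->.
    rewrite mem_IncL; apply/hasP; exists u => //.
    rewrite (nonempty u uF') /= inE hu; apply/orP; right; apply/mapP; by exists s.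
have h1 := uniq_leq_size uAB sAB.
rewrite size_cat size_map in h1.
have h2 : size (IncL R) <= size Aa.
  apply: uniq_leq_size; first exact: undup_uniq.
  by move=> w hw; rewrite mem_undup mem_cat hw.
have h3 : size F <= size Aa.
  apply: uniq_leq_size => // w hw; by rewrite mem_undup mem_cat hw orbT.
have := A (size R) (size T); rewrite -hsize => hA1.
apply: (leq_trans hA1); apply: (leq_trans _ h1); apply: leq_add => //.
rewrite geq_max h3 andbT; exact: leq_trans IHR h2.
Qed.

Definition Lseg d N := [seq u <- sets d (N + d) | rk u <= N].

Lemma Lseg_uniq d N : uniq (Lseg d N).
Proof. exact/filter_uniq/uniq_sets. Qed.

Lemma mem_Lseg d N u : (u \in Lseg d N) = dset d u && (rk u <= N).
Proof.
rewrite mem_filter mem_sets andbC; apply/idP/idP.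
  by case/andP => /andP[-> _] ->.
case/andP => hd hN; rewrite hd hN /=.
case: d hd => [|e] hd; first by move: hd; rewrite dset0 => /eqP ->.
case: u hd hN => [//|x r] hd hN.
have := rk_cons_bound hd => /andP[b1 b2].
have b1' : 'C(x.-1, e.+1) < rk (x :: r) := b1.
have hN' : rk (x :: r) <= N := hN.
have xb : x <= N + e.
  case: (leqP x (N + e)) => // h.
  have : 'C(N + e, e.+1) <= 'C(x.-1, e.+1) by apply: leq_bin2l; lia.
  have : N <= 'C(N + e, e.+1) by apply: bin_ge_n; lia.
  lia.
rewrite andbT; apply/allP => y hy; have := dec_head_bound (andP hd).2 hy; lia.
Qed.

Lemma count_iota_le N C : N <= C -> count (fun k => k <= N) (iota 1 C) = N.
Proof.
move=> NC; rewrite -(subnKC NC) iotaD count_cat.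
have -> : count (fun k => k <= N) (iota 1 N) = N.
  rewrite (eq_in_count (a2 := predT)) ?count_predT ?size_iota //.
  by move=> k; rewrite mem_iota /=; lia.
rewrite (eq_in_count (a2 := pred0)) ?count_pred0 ?addn0 //.
by move=> k; rewrite mem_iota /=; lia.
Qed.

Lemma size_Lseg d N : 0 < d -> size (Lseg d N) = N.
Proof.
move=> d0; rewrite /Lseg size_filter.
have hC : N <= 'C(N + d, d).
  case: N => [//|N]; case: d d0 => [//|e] _.
  have h1 := @bin_ge_n e N.+1 isT.
  have h2 := leq_bin2l e.+1 (leq_addr 1 (N.+1 + e)).
  rewrite addnS; apply: (leq_trans h1); apply: (leq_trans h2); rewrite addn1 addSn.
  by rewrite leqnn.
set M := N + d in hC *.
rewrite -(count_map rk (fun k => k <= N)).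
have um : uniq (map rk (sets d M)).
  rewrite map_inj_in_uniq ?uniq_sets //.
  move=> u v; rewrite !mem_sets => /andP[hu _] /andP[hv _]; exact: (rk_inj hu hv).
have sub : {subset map rk (sets d M) <= iota 1 'C(M, d)}.
  move=> k /mapP[u]; rewrite mem_sets => /andP[hu hM] ->.
  have := rk_bound hu hM; rewrite mem_iota; lia.
have [_ hm] := uniq_min_size um sub ltac:(by rewrite size_map size_iota size_sets).
have pe : perm_eq (map rk (sets d M)) (iota 1 'C(M, d)).
  by apply: uniq_perm => //; exact: iota_uniq.
rewrite ((permP pe) (fun k => k <= N)); exact: count_iota_le.
Qed.

Definition sh c (u : seq nat) := map (addn c) u.

Lemma incs_sh c u : incs (sh c u) = map (sh c) (incs u).
Proof.
elim: u => [//|x r IH] /=; rewrite /sh /= in IH *; rewrite IH -!map_comp.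
by congr (_ :: _); apply: eq_map => s /=; rewrite addnS.
Qed.

Lemma dset_sh d c u : dset d u -> dset d (sh c u).
Proof.
elim: u d => [|x r IH] [|d] //= ; rewrite !dset_cons => /and3P[hr hd x0].
rewrite (IH d hd) /=; apply/andP; split; last lia.
by apply/allP => y /mapP[z /(allP hr) hz ->]; lia.
Qed.

Lemma IncL_sh_size c F : size (IncL (map (sh c) F)) <= size (IncL F).
Proof.
rewrite -(size_map (sh c) (IncL F)); apply: uniq_leq_size; first exact: undup_uniq.
move=> w; rewrite mem_IncL => /hasP[v /mapP[u uF ->]]; rewrite incs_sh => /mapP[w' hw' ->].
apply: map_f; rewrite mem_IncL; apply/hasP; by exists u.
Qed.

Lemma IncL_cat_size A B : size (IncL (A ++ B)) <= size (IncL A) + size (IncL B).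
Proof.
rewrite -size_cat; apply: uniq_leq_size; first exact: undup_uniq.
move=> w; rewrite mem_cat !mem_IncL has_cat; by case/orP => ->; rewrite ?orbT.
Qed.

Lemma IncL_Lseg d x : 0 < d -> size (IncL (Lseg d x)) <= g d x.
Proof.
move=> d0; apply: leq_trans (_ : _ <= size (Lseg d (g d x))) _; last by rewrite size_Lseg.
apply: uniq_leq_size; first exact: undup_uniq.
move=> w; rewrite mem_IncL => /hasP[u]; rewrite mem_Lseg => /andP[hu hux] hw.
rewrite mem_Lseg (incs_dset hu hw) /=.
apply: (leq_trans (rk_incs hu hw)); rewrite (rk_S hu); exact: g_mono.
Qed.

Lemma MT_Sub d : MT d -> Subg d.
Proof.
move=> M x y; case: d M => [|e] M; first by rewrite !g0n.
set X := Lseg e.+1 x; set c := x + e.+1; set Y := map (sh c) (Lseg e.+1 y).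
have uZ : uniq (X ++ Y).
  rewrite cat_uniq Lseg_uniq map_inj_uniq ?Lseg_uniq; last first.
    by move=> u v; apply: inj_map; exact: addnI.
  rewrite andbT /=; apply/hasPn => w /mapP[v]; rewrite mem_Lseg => /andP[hv _] ->.
  apply/negP; rewrite mem_filter mem_sets => /andP[_ /andP[_ hall]].
  case: v hv hall => [//|z r] hv /= /andP[hz _].
  have z0 : 0 < z by move: hv; rewrite dset_cons => /and3P[].
  move: hz; rewrite /c; lia.
have aZ : all (dset e.+1) (X ++ Y).
  rewrite all_cat; apply/andP; split; apply/allP => w.
    by rewrite mem_Lseg => /andP[].
  by move=> /mapP[v]; rewrite mem_Lseg => /andP[hv _] ->; exact: dset_sh.
have := M _ uZ aZ; rewrite size_cat size_map !size_Lseg // => h.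
apply: (leq_trans h); apply: (leq_trans (IncL_cat_size _ _)).
apply: leq_add; first exact: IncL_Lseg.
apply: leq_trans (IncL_sh_size _ _) _; exact: IncL_Lseg.
Qed.

Lemma master d : [/\ MT d, Subg d, Ar d, Ebd d & (0 < d -> Z1p d)].
Proof.
elim: d => [|d [M S A E Z]].
  by split; [exact: MT0 | exact: (MT_Sub MT0) | exact: Ar0 | exact: E0 | ].
have M' := MTS M A.
have S' := MT_Sub M'.
have E' := Estep S E.
have Z' : Z1p d.+1.
  case: d {M A E M' E'} S S' Z => [|e] S S' Z; first exact: Z1_1.
  exact: Z1S (Z isT) S' S.
have A' := ArS S' S E E' (Zcomb Z' (Z2 A S)).
by split.
Qed.

Lemma MT_all d : MT d.
Proof. by case: (master d). Qed.

Lemma dface_rev d w : dface d w = dset d (rev w).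
Proof.
rewrite /dface /dset /is_face /dec size_rev all_rev rev_sorted eq_sym.
have -> : sorted (fun z : nat => [eta leq z.+1]) w = sorted ltn w by [].
by case: (sorted ltn w); case: (all _ w); case: (d == size w).
Qed.

Definition sqP (U V : seq nat) : bool :=
  has (fun x => (x \notin U) &&
         all (fun y => (y \in U) == (y \in V)) [seq y <- U ++ V | x < y]) V.

Lemma sqlt_rev u v : sqlt u v = sqP (rev u) (rev v).
Proof.
rewrite /sqlt /sqP has_rev; apply: eq_has => x /=; rewrite mem_rev.
congr (_ && _); rewrite !all_filter -rev_cat all_rev !all_cat andbC.
by congr (_ && _); apply: eq_all => y /=; rewrite !mem_rev.
Qed.

Lemma sqP_lex d U V : dset d U -> dset d V -> sqP U V = lexlt U V.
Proof.
elim: U d V => [|a r IH] d [|b s] //.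
  by move=> /dset_size <- /dset_size.
case: d => [//|e]; rewrite !dset_cons => /and3P[hr dr a0] /and3P[hs ds b0] /=.
have mr : forall y, y \in r -> y < a by move=> y /(allP hr).
have ms : forall y, y \in s -> y < b by move=> y /(allP hs).
case: (ltngtP a b) => hab /=.
- apply/hasP; exists b; first by rewrite inE eqxx.
  rewrite inE negb_or; apply/andP; split.
    apply/andP; split; first by rewrite neq_ltn hab orbT.
    by apply/negP => /mr; lia.
  apply/allP => y; rewrite mem_filter => /andP[hy]; rewrite mem_cat !inE.
  by rewrite -orbA => /or4P[/eqP hh|/mr hh|/eqP hh|/ms hh]; exfalso; lia.
- apply/negP => /hasP[x]; rewrite inE => hx /andP[xU /allP hall].
  have xb : x <= b by case/orP: hx => [/eqP ->|/ms]; lia.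
  have := hall a; rewrite mem_filter mem_cat !inE eqxx /= => /(_ ltac:(lia)).
  case/orP => [/eqP hh|/ms]; lia.
- subst b; rewrite -(IH e s dr ds); apply/hasP/hasP => [[x]|[x xs]].
  + rewrite inE => hx /andP[xU /allP hall].
    have xa : x != a by apply/negP => /eqP hxa; move: xU; rewrite hxa inE eqxx.
    have xs : x \in s by move: hx; rewrite (negPf xa).
    exists x => //; apply/andP; split; first by move: xU; rewrite inE negb_or => /andP[].
    apply/allP => y; rewrite mem_filter => /andP[hy ys].
    have := hall y; rewrite mem_filter hy mem_cat !inE => /(_ _).
    have ya : y != a by move: ys; rewrite mem_cat => /orP[/mr|/ms]; lia.
    rewrite (negPf ya) /= => /(_ ltac:(by move: ys; rewrite mem_cat => /orP[] ->; rewrite ?orbT)).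
    done.
  + move=> /andP[xr /allP hall]; exists x; first by rewrite inE xs orbT.
    have xa : x < a by apply: ms.
    apply/andP; split; first by rewrite inE negb_or xr andbT neq_ltn xa.
    apply/allP => y; rewrite mem_filter => /andP[hy]; rewrite mem_cat !inE.
    case: (eqVneq y a) => [-> //|ya] /= hy2.
    have := hall y; rewrite mem_filter hy mem_cat; by apply.
Qed.

Lemma Inc1_ge pi : Inc1 pi -> forall j, 0 < j -> j <= pi j.
Proof.
move=> hpi; elim=> [//|j IH] _.
case: j IH => [|j] IH; first by case: (hpi 1 isT).
have := IH isT; case: (hpi j.+1 isT) => _ h _; lia.
Qed.

Lemma Inc1_le pi j : Inc1 pi -> 0 < j -> pi j <= j.+1.
Proof. by move=> hpi j0; case: (hpi j j0). Qed.

Lemma Inc1_downS pi j : Inc1 pi -> 0 < j -> pi j.+1 = j.+1 -> pi j = j.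
Proof.
move=> hpi j0 h; have := Inc1_ge hpi j0; case: (hpi j j0) => _ h2 _; lia.
Qed.

Lemma Inc1_down pi i j : Inc1 pi -> 0 < i -> i <= j -> pi j = j -> pi i = i.
Proof.
move=> hpi i0; elim: j => [|j IH]; first by lia.
rewrite leq_eqVlt => /orP[/eqP <- //|hij] h.
apply: IH; first lia.
apply: Inc1_downS => //; lia.
Qed.

Lemma map_Inc1_incs pi U : Inc1 pi -> dec U -> map pi U \in incs U.
Proof.
move=> hpi; elim: U => [|x r IH] /=; first by rewrite inE.
rewrite decE => /and3P[hr dr x0].
have g1 := Inc1_ge hpi x0; have g2 := Inc1_le hpi x0.
case: (ltngtP (pi x) x) => h; first by lia.
- rewrite inE; apply/orP; right; have -> : pi x = x.+1 by lia.
  by apply: map_f; apply: IH.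
- rewrite h map_id_in ?inE ?eqxx //.
  move=> y yr; have := allP hr y yr; move: dr => /andP[_ /allP /(_ y yr) y0] yx.
  by apply: (Inc1_down hpi y0 (ltnW yx) h).
Qed.

Definition shf t j := if t <= j then j.+1 else j.

Lemma Inc1_shf t : Inc1 (shf t).
Proof. move=> j j0; rewrite /shf; case: (leqP t j); case: (leqP t j.+1); split; lia. Qed.

Lemma incs_shf U W : dec U -> W \in incs U -> exists2 t, t <= (head 0 U).+1 & W = map (shf t) U.
Proof.
elim: U W => [|x r IH] W /=; first by rewrite inE => _ /eqP ->; exists 0.
rewrite decE => /and3P[hr dr x0]; rewrite inE => /orP[/eqP ->|/mapP[S hS ->]].
  exists x.+1 => //=; rewrite /shf ltnn; congr (_ :: _).
  by rewrite map_id_in // => y /(allP hr) yx; rewrite leqNgt ltnS (ltnW yx).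
have [t ht ->] := IH S dr hS.
exists t => /=; last first.
  rewrite /shf; case: (leqP t x) => // h; exfalso.
  case: r hr ht {IH hS dr} => [|y r'] /=; first lia.
  by move=> /andP[yx _]; lia.
case: r hr ht {IH hS dr} => [|y r'] /= => [_|/andP[yx _]]; lia.
Qed.

Lemma has_card_uniq P n m : has_card P n -> has_card P m -> n = m.
Proof.
move=> [s1 [u1 [<- h1]]] [s2 [u2 [<- h2]]].
apply: perm_size; apply: uniq_perm => // x.
by apply/idP/idP => hx; [apply/h2/h1 | apply/h1/h2].
Qed.

Lemma mem_map_rev (L : seq (seq nat)) x : (x \in map rev L) = (rev x \in L).
Proof. by rewrite -{1}(revK x) (mem_map (can_inj (@revK nat))). Qed.

Lemma card_le d v : 0 < d -> dface d v ->
  has_card (fun w => dface d w /\ (w = v \/ sqlt w v)) (rk (rev v)).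
Proof.
move=> d0 hv; exists (map rev (Lseg d (rk (rev v)))); split.
  by rewrite map_inj_uniq ?Lseg_uniq //; exact: can_inj (@revK nat).
split; first by rewrite size_map size_Lseg.
move=> x; rewrite mem_map_rev mem_Lseg -dface_rev.
rewrite dface_rev in hv.
split.
  case=> hx hor; rewrite hx /=; rewrite dface_rev in hx.
  case: hor => [->//|]; rewrite sqlt_rev (sqP_lex hx hv) -(rk_lt hx hv); exact: ltnW.
move=> /andP[hx hle]; split => //; rewrite dface_rev in hx.
move: hle; rewrite leq_eqVlt => /orP[/eqP e|].
  left; have := rk_inj hx hv e; by move/(congr1 rev); rewrite !revK.
by rewrite (rk_lt hx hv) -(sqP_lex hx hv) -sqlt_rev; right.
Qed.

Unset Implicit Arguments.

Theorem corollary4p2 (m : nat) (D : seq nat -> Prop) :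
  simplicial_complex m D ->
  forall u, Inccomplex (Ccomplex D) u -> Ccomplex (Inccomplex D) u.
Proof.
move=> [hD _] u [->|[d [d0 [w [pi [[hw hsz] [hpi ->]]]]]]]; first by left.
case: hw => [hw0|[d' [d'0 [hdf [n [k [hcn [hck hkn]]]]]]]].
  by move: hsz; rewrite hw0 /=; lia.
have ed : d' = d by rewrite -hsz; case/andP: hdf => _ /eqP.
subst d'.
case: hcn => s [us [szs hs]].
have faceD : forall x, Fd D d x -> dface d x.
  move=> x [hx hsx]; rewrite /dface hsx eqxx andbT.
  by case/andP: (hD x hx).
have dw : dset d (rev w) by rewrite -dface_rev.
set F := map rev s.
have uF : uniq F by rewrite map_inj_uniq //; exact: can_inj (@revK nat).
have aF : all (dset d) F.
  apply/allP => U /mapP[x xs ->]; rewrite -dface_rev; apply: faceD; exact/hs.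
have hinc : map pi (rev w) \in incs (rev w).
  by apply: map_Inc1_incs => //; case/andP: dw.
right; exists d; split => //; split.
  by rewrite dface_rev -map_rev; exact: incs_dset hinc.
exists (size (IncL F)), (rk (rev (map pi w))); split; last split.
- exists (map rev (IncL F)); split.
    by rewrite map_inj_uniq ?undup_uniq //; exact: can_inj (@revK nat).
  split; first by rewrite size_map.
  move=> x; rewrite mem_map_rev mem_IncL; split.
  + move=> [[x0|[d'' [_ [w' [pi' [[hw' hs'] [hpi' ex]]]]]]] hsx].
      by move: hsx; rewrite x0 /=; lia.
    have ed : d'' = d by rewrite -hs' -hsx ex size_map.
    subst d'' x.
    have w's : w' \in s by apply/hs.
    apply/hasP; exists (rev w'); first exact: map_f.
    rewrite -map_rev; apply: map_Inc1_incs => //.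
    by move: (faceD w' (conj hw' ed)); rewrite dface_rev => /andP[].
  + move=> /hasP[U /mapP[w' w's ->] hx].
    have fw' := faceD w' ((hs w').2 w's).
    have dw' : dec (rev w') by move: fw'; rewrite dface_rev => /andP[].
    have [t _ ht] := incs_shf dw' hx.
    have ex : x = map (shf t) w' by rewrite -(revK x) ht map_rev revK.
    split.
      right; exists d; split => //; exists w', (shf t); split; first exact/hs.
      by split; first exact: Inc1_shf.
    by rewrite ex size_map; case/andP: fw' => _ /eqP.
- apply: card_le => //; by rewrite dface_rev -map_rev; exact: incs_dset hinc.
- rewrite -map_rev; apply: (leq_trans (rk_incs dw hinc)); rewrite (rk_S dw).
  have ek : rk (rev w) = k := esym (has_card_uniq hck (card_le d0 hdf)).
  rewrite ek; apply: (leq_trans (g_mono d hkn)).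
  have := MT_all uF aF; rewrite size_map szs; exact.
Qed.
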